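(* Let $G=(V,E,w)$ be an edge-weighted graph with positive rational weights and no isolated vertices. A set $S\subseteq V$ is a weighted partial positive influence total dominating set (WPPITDS) if and only if $g(S)=g_{\max}$, where $g(A)=h(A)+\frac1L f(A)$ and $g_{\max}=\max_{X\subseteq V}g(X)$.
   Context: $N_A(v)=N(v)\cap A$, $W_A(v)=\sum_{u\in N_A(v)}w_{(v,u)}$, $W(v)=W_V(v)$. $h(A)=\sum_{v\in V}h_A(v)$ with $h_A(v)=W(v)/2$ if $v\in A$ or $W_A(v)\ge W(v)/2$, and $h_A(v)=W_A(v)$ otherwise. $f(A)=\sum_{v\in V}\delta_A(v)$ with $\delta_A(v)=1$ if $|N_A(v)|>0$ and $0$ otherwise. $L=\max_v l(v)$ where $l(v)$ is the lcm of the denominators of the reduced fractions $W(v)/2$ and of the weights of edges incident to $v$. A WPPITDS is a set $S\subseteq V$ such that every $v\in V\setminus S$ satisfies $W_S(v)\ge W(v)/2$ and every vertex of $S$ has at least one neighbor in $S$. *)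

(* Defs.v *)
From HB Require Import structures.
From mathcomp Require Import all_boot all_order all_algebra.
Set Implicit Arguments. Unset Strict Implicit. Unset Printing Implicit Defensive.
Import Order.TTheory GRing.Theory Num.Theory.
Local Open Scope ring_scope.

(* Edge-weighted simple graph G = (V, E, w): vertex set a finType V, adjacency
   a symmetric irreflexive relation e, weights w : V -> V -> rat (only values
   on edges matter). *)
Section WPPITDS.
Variables (V : finType) (e : rel V) (w : V -> V -> rat).

Definition NA (A : {set V}) (v : V) : {set V} := [set u in A | e v u].

Definition WA (A : {set V}) (v : V) : rat := \sum_(u in NA A v) w v u.

Definition Wt (v : V) : rat := WA [set: V] v.

Definition hA (A : {set V}) (v : V) : rat :=
  if (v \in A) || (Wt v / 2 <= WA A v) then Wt v / 2 else WA A v.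

Definition h (A : {set V}) : rat := \sum_(v : V) hA A v.

Definition deltaA (A : {set V}) (v : V) : nat := (0 < #|NA A v|)%N.

Definition f (A : {set V}) : nat := (\sum_(v : V) deltaA A v)%N.

Definition lv (v : V) : nat :=
  lcmn `|denq (Wt v / 2)|%N (\big[lcmn/1%N]_(u | e v u) `|denq (w v u)|%N).

Definition L : nat := (\max_(v : V) lv v)%N.

Definition g (A : {set V}) : rat := h A + (L%:R)^-1 * (f A)%:R.

Definition gmax : rat := \big[Num.max/g set0]_(X : {set V}) g X.

Definition is_WPPITDS (S : {set V}) : Prop :=
  (forall v, v \notin S -> Wt v / 2 <= WA S v) /\
  (forall v, v \in S -> exists u, u \in NA S v).

End WPPITDS.

(* Main.v *)
Require Import Defs.
From HB Require Import structures.
From mathcomp Require Import all_boot all_order all_algebra.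
Import Order.TTheory GRing.Theory Num.Theory.
From mathcomp Require Import lra.
Local Open Scope ring_scope.

Definition isint (x : rat) := exists z : int, x = z%:~R.

Lemma den_int (q : rat) (n : nat) : (`|denq q|%N %| n)%N -> isint (q * n%:R).
Proof.
move=> /dvdnP [k ->]. exists (numq q * k%:Z).
rewrite natrM mulrA.
have -> : ((`|denq q|%N)%:R : rat) = (denq q)%:~R.
  by rewrite -[X in X%:~R](gez0_abs (ltW (denq_gt0 q))).
by rewrite intrM numqE -mulrA [k%:R * _]mulrC mulrA.
Qed.

Lemma isintD x y : isint x -> isint y -> isint (x + y).
Proof. by move=> [a ->] [b ->]; exists (a + b); rewrite intrD. Qed.
Lemma isintB x y : isint x -> isint y -> isint (x - y).
Proof. by move=> [a ->] [b ->]; exists (a - b); rewrite intrB. Qed.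
Lemma isint_ge1 x : isint x -> 0 < x -> 1 <= x.
Proof. by move=> [a ->]; rewrite ltr0z ler1z. Qed.

Section S.
Variables (V : finType) (e : rel V) (w : V -> V -> rat).

Lemma lv_gt0 v : (0 < lv e w v)%N.
Proof.
rewrite /lv lcmn_gt0 absz_gt0 denq_neq0 /=.
elim/big_ind: _ => //.
  by move=> a b; rewrite lcmn_gt0 => -> ->.
by move=> u _; rewrite absz_gt0 denq_neq0.
Qed.

Lemma lv_leL v : (lv e w v <= L e w)%N.
Proof. exact: (leq_bigmax v). Qed.

Lemma WA_int A v : isint (WA e w A v * (lv e w v)%:R).
Proof.
rewrite /WA mulr_suml; elim/big_ind: _ => //.
- by exists 0.
- exact: isintD.
move=> u; rewrite inE => /andP [_ evu]; apply: den_int.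
apply: dvdn_trans (dvdn_lcmr _ _).
by move/dvdn_biglcmP: (dvdnn (\big[lcmn/1%N]_(u | e v u) `|denq (w v u)|%N)) => /(_ u evu).
Qed.

Lemma hA_le A v : hA e w A v <= Wt e w v / 2.
Proof. by rewrite /hA; case: ifP => // /norP [_]; rewrite -ltNge => /ltW. Qed.

Lemma hA_gap A v : hA e w A v < Wt e w v / 2 ->
  hA e w A v <= Wt e w v / 2 - (L e w)%:R^-1.
Proof.
rewrite /hA; case: ifP => [_|/norP [_ H] _]; first by rewrite ltxx.
rewrite -ltNge in H.
have lpos : (0 : rat) < (lv e w v)%:R by rewrite ltr0n lv_gt0.
have Lpos : (0 : rat) < (L e w)%:R by rewrite ltr0n (leq_trans (lv_gt0 v) (lv_leL v)).
have hi : isint ((Wt e w v / 2 - WA e w A v) * (lv e w v)%:R).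
  rewrite mulrBl; apply: isintB; last exact: WA_int.
  by apply: den_int; apply: dvdn_lcml.
have := isint_ge1 _ hi; rewrite pmulr_lgt0 // subr_gt0 => /(_ H) h1.
have h2 : (lv e w v)%:R^-1 <= Wt e w v / 2 - WA e w A v.
  by rewrite -(ler_pM2r lpos) mulVf ?gt_eqF.
have h3 : (L e w)%:R^-1 <= (lv e w v)%:R^-1 :> rat.
  by rewrite lef_pV2 ?posrE // ler_nat lv_leL.
rewrite lerBrDr addrC -lerBrDr; exact: le_trans h3 h2.
Qed.

End S.

Section S.
Variables (V : finType) (e : rel V) (w : V -> V -> rat).
Hypothesis w_pos : forall u v, e u v -> 0 < w u v.
Hypothesis no_isolated : forall v, exists u, e v u.

Let H := \sum_(v : V) Wt e w v / 2.
Let n := #|V|.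

Lemma h_le A : h e w A <= H.
Proof. by apply: ler_sum => v _; apply: hA_le. Qed.

Lemma f_le A : (f e A <= n)%N.
Proof. by rewrite /f /n -sum1_card; apply: leq_sum => v _; apply: leq_b1. Qed.

Lemma hT : h e w setT = H.
Proof. by apply: eq_bigr => v _; rewrite /hA in_setT. Qed.

Lemma fT : f e setT = n.
Proof.
rewrite /f /n -sum1_card; apply: eq_bigr => v _.
have [u evu] := no_isolated v.
have : (0 < #|NA e setT v|)%N by apply/card_gt0P; exists u; rewrite inE in_setT.
by rewrite /deltaA => ->.
Qed.

Lemma g_le A : g e w A <= g e w setT.
Proof.
rewrite /g hT fT; apply: lerD; first exact: h_le.
by apply: ler_wpM2l; [rewrite invr_ge0 ler0n | rewrite ler_nat f_le].
Qed.

Lemma le_bigmax_seq (T : eqType) (F : T -> rat) x0 (s : seq T) i :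
  i \in s -> F i <= \big[Num.max/x0]_(j <- s) F j.
Proof.
elim: s => // a s IH; rewrite in_cons big_cons => /orP [/eqP-> | /IH h].
  by rewrite le_max lexx.
by rewrite le_max h orbT.
Qed.

Lemma gmaxE : gmax e w = g e w setT.
Proof.
apply: le_anti; apply/andP; split.
  rewrite /gmax; elim/big_ind: _ => //; first exact: g_le.
  by move=> x y hx hy; rewrite ge_max hx hy.
  by move=> X _; apply: g_le.
by rewrite /gmax; apply: le_bigmax_seq; rewrite mem_index_enum.
Qed.

Lemma Wt_gt0 v : 0 < Wt e w v.
Proof.
have [u evu] := no_isolated v.
rewrite /Wt /WA (bigD1 u) /=; last by rewrite inE in_setT.
apply: ltr_pwDl; first exact: w_pos.
by apply: sumr_ge0 => x /andP []; rewrite inE => /andP [_ ex] _; apply/ltW/w_pos.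
Qed.

Lemma main_iff (S : {set V}) : is_WPPITDS e w S <-> g e w S = g e w setT.
Proof.
split.
  move=> [H1 H2]; rewrite /g hT fT; congr (_ + _ * _%:R).
    apply: eq_bigr => v _; rewrite /hA; case: (boolP (v \in S)) => //= vS.
    by rewrite H1.
  rewrite /f /n -sum1_card; apply: eq_bigr => v _; rewrite /deltaA.
  case: (ltnP 0 #|NA e S v|) => //; rewrite leqn0 => /eqP/cards0_eq h0.
  have W0 : WA e w S v = 0 by rewrite /WA h0 big_set0.
  case: (boolP (v \in S)) => vS.
    by have [u] := H2 v vS; rewrite h0 inE.
  have := H1 v vS; rewrite W0 => hle; have := Wt_gt0 v; move=> hp; exfalso; clear -hle hp; lra.
move=> gS; split.
  move=> v vS; rewrite leNgt; apply/negP => lt.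
  have Lpos : (0 : rat) < (L e w)%:R by rewrite ltr0n (leq_trans (@lv_gt0 _ e w v) (@lv_leL _ e w v)).
  have hv : hA e w S v < Wt e w v / 2 by rewrite /hA (negbTE vS) /= leNgt lt.
  have hS : h e w S <= H - (L e w)%:R^-1.
    rewrite /h /H (bigD1 v) //= [X in _ <= X - _](bigD1 v) //=.
    rewrite addrAC; apply: lerD; first exact: hA_gap.
    by apply: ler_sum => x _; apply: hA_le.
  have fS : (L e w)%:R^-1 * (f e S)%:R <= (L e w)%:R^-1 * n%:R :> rat.
    by apply: ler_wpM2l; [rewrite invr_ge0 ler0n | rewrite ler_nat f_le].
  have y0 : 0 < (L e w)%:R^-1 :> rat by rewrite invr_gt0.
  move: gS; rewrite {1}/g {1}/g hT fT.
  set y := (L e w)%:R^-1 in hS fS y0 *.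
  set a := y * (f e S)%:R in fS *; set b := y * n%:R in fS *.
  lra.
move=> v vS.
case h1: (0 < #|NA e S v|)%N; first by move/card_gt0P: h1.
exfalso.
have Lpos : (0 : rat) < (L e w)%:R by rewrite ltr0n (leq_trans (@lv_gt0 _ e w v) (@lv_leL _ e w v)).
have fS : ((f e S).+1 <= n)%N.
  rewrite /f /n -sum1_card (bigD1 v) //= [X in (_ <= X)%N](bigD1 v) //=.
  rewrite /deltaA h1 /= add0n add1n ltnS.
  by apply: leq_sum => x _; apply: leq_b1.
have fS' : (L e w)%:R^-1 * (f e S)%:R + (L e w)%:R^-1 <= (L e w)%:R^-1 * n%:R :> rat.
  rewrite -[X in _ + X]mulr1 -mulrDr; apply: ler_wpM2l; first by rewrite invr_ge0 ler0n.
  by rewrite natr1 ler_nat.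
have hS := h_le S.
have y0 : 0 < (L e w)%:R^-1 :> rat by rewrite invr_gt0.
move: gS; rewrite {1}/g {1}/g hT fT.
set y := (L e w)%:R^-1 in hS fS' y0 *.
set a := y * (f e S)%:R in fS' *; set b := y * n%:R in fS' *.
lra.
Qed.

End S.

Theorem mainTheorem16 (V : finType) (e : rel V) (w : V -> V -> rat)
  (e_sym : symmetric e) (e_irr : irreflexive e)
  (w_sym : forall u v, w u v = w v u)
  (w_pos : forall u v, e u v -> 0 < w u v)
  (no_isolated : forall v, exists u, e v u)
  (S : {set V}) :
  is_WPPITDS e w S <-> g e w S = gmax e w.
Proof. by rewrite (@gmaxE _ e w no_isolated); apply: main_iff. Qed.
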